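(* If $F \dashv G$ is a transparent Galois connection for $p$, then for every finite $L \subseteq \mathcal{L}$, $|C_{F\dashv G}(L)| \ge |k_p^*(C(L))|$.
   Context: $\mathcal{L}$ is a join semi-lattice with least element $\bot$ that also has greatest lower bounds (meets). Programs $p$ are partial functions from $\mathcal{P}(I \times \mathcal{L})$ to $\mathcal{P}(O \times \mathcal{L})$; $\mathcal{L}(x) = \{\ell \mid a^\ell \in x\}$ is the set of labels in $x$. For finite $S \subseteq \mathcal{L}$, $C(S) = \{\bigsqcup S' \mid S' \subseteq S\}$ is the closure set. A Galois connection $F \dashv G$ between $\mathcal{L}$ and a lattice $\mathcal{L}'$ is a pair $F : \mathcal{L} \to \mathcal{L}'$, $G : \mathcal{L}' \to \mathcal{L}$ with $F(\ell) \sqsubseteq \jmath \iff \ell \sqsubseteq G(\jmath)$. For a function $h$ and set $S$, $h^*(S) = \{h(s) \mid s \in S\}$, and $C_{F\dashv G}(S) = G^*(C(F^*(S)))$. $F \dashv G$ is transparent for $p$ if $\mathcal{L}(p(x)) \subseteq (G\circ F)^*(\mathcal{L})$ for all $x$. $k_p(\ell)$ is the greatest lower bound (meet) of $\{\jmath \mid \exists x.\ \jmath \in \mathcal{L}(p(x)) \wedge \ell \sqsubseteq \jmath\}$. *)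

(* Defs.v *)
From HB Require Import structures.
From mathcomp Require Import all_boot all_order.
From mathcomp Require Import finmap.
Set Implicit Arguments. Unset Strict Implicit. Unset Printing Implicit Defensive.
Import Order.Theory.
Local Open Scope order_scope.
Local Open Scope fset_scope.

Definition labels (A T : Type) (x : A * T -> Prop) : T -> Prop :=
  fun l => exists a, x (a, l).

Definition closureC d (T : bJoinSemilatticeType d) (S : {fset T}) : {fset T} :=
  [fset (\join_(x <- (S' : seq T)) x) | S' : {fset T} in fpowerset S].

Definition closureGC d (T : bJoinSemilatticeType d) d' (T' : bJoinSemilatticeType d')
  (F : T -> T') (G : T' -> T) (S : {fset T}) : {fset T} :=
  [fset G j | j in closureC [fset F l | l in S]].

Definition is_glb d (T : porderType d) (S : T -> Prop) (m : T) : Prop :=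
  (forall s, S s -> m <= s) /\ (forall m', (forall s, S s -> m' <= s) -> m' <= m).

Definition galois_connection d (T : porderType d) d' (T' : porderType d')
  (F : T -> T') (G : T' -> T) : Prop :=
  forall l j, (F l <= j) <-> (l <= G j).

(* Programs: partial functions P(I x L) -> P(O x L), as option-valued maps. *)
Definition program (I O T : Type) := (I * T -> Prop) -> option (O * T -> Prop).

(* Transparency: L(p x) \subseteq (G o F)^*(L) for every x (where p x is defined). *)
Definition transparent d (T : porderType d) d' (T' : porderType d')
  (I O : Type) (p : program I O T) (F : T -> T') (G : T' -> T) : Prop :=
  forall x y, p x = Some y -> forall l, labels y l -> exists l0, l = G (F l0).

Definition kp d (T : porderType d) (inf : (T -> Prop) -> T)
  (I O : Type) (p : program I O T) (l : T) : T :=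
  inf (fun j => exists x y, p x = Some y /\ labels y j /\ l <= j).

(* Main.v *)
Require Import Defs.
From HB Require Import structures.
From mathcomp Require Import all_boot all_order.
From mathcomp Require Import finmap.
Import Order.Theory.
Local Open Scope order_scope.
Local Open Scope fset_scope.

Lemma join_le_all d (T : bJoinSemilatticeType d) (A : Type) (s : seq A) (f : A -> T) z :
  (\join_(x <- s) f x <= z) = all (fun x => f x <= z) s.
Proof.
elim: s => [|a s IH]; first by rewrite big_nil le0x.
by rewrite big_cons /= leUx IH.
Qed.

Lemma lub_eq d (T : porderType d) (a b : T) :
  (forall z, (a <= z) = (b <= z)) -> a = b.
Proof.
move=> H; apply/le_anti/andP; split; first by rewrite H.
by rewrite -H.
Qed.

Theorem mainTheorem12
  (d : Order.disp_t) (T : bJoinSemilatticeType d)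
  (inf : (T -> Prop) -> T) (inf_glb : forall S, is_glb S (inf S))
  (d' : Order.disp_t) (T' : bLatticeType d')
  (I O : Type) (p : program I O T)
  (F : T -> T') (G : T' -> T)
  (HGC : galois_connection F G)
  (Htr : transparent p F G)
  (L : {fset T}) :
  #|` closureGC F G L | >= #|` [fset kp inf p l | l in closureC L] |.
Proof.
have Hunit l : l <= G (F l) by apply/HGC.
have counit j : F (G j) <= j by apply/HGC.
have key l j : (l <= G j) = (G (F l) <= G j).
  apply/idP/idP => H.
  - apply/HGC; apply: le_trans (counit _) _; apply/HGC; exact: H.
  - exact: le_trans (Hunit l) H.
have Fjoin (s : seq T) : F (\join_(x <- s) x) = \join_(x <- s) F x.
  apply: lub_eq => z; rewrite join_le_all.
  apply/idP/idP => H.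
  - move/HGC: H.
    by rewrite join_le_all => /allP Hs; apply/allP => x /Hs /HGC.
  - apply/HGC; rewrite join_le_all; apply/allP => x xs.
    by apply/HGC; move/allP: H; apply.
have inGC l : l \in closureC L -> G (F l) \in closureGC F G L.
  case/imfsetP => S' /= S'in ->.
  apply/imfsetP; exists (\join_(x <- (F @` S' : seq T')) x); last first.
    congr G; rewrite Fjoin; apply: lub_eq => z; rewrite !join_le_all.
    apply/allP/allP => H x xs.
    - by case/imfsetP: xs => y ys ->; apply: H.
    - by apply: H; apply/imfsetP; exists x.
  apply/imfsetP; exists (F @` S') => //=.
  rewrite fpowersetE; apply/fsubsetP => y /imfsetP [x xs ->].
  apply/imfsetP; exists x => //=.
  by move: S'in; rewrite /= fpowersetE => /fsubsetP; apply.
have kpE l : kp inf p l = kp inf p (G (F l)).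
  rewrite /kp.
  set P1 := fun j => _; set P2 := fun j => _.
  have E j : P1 j <-> P2 j.
    rewrite /P1 /P2; split => [[x [y [H1 [H2 H3]]]]|[x [y [H1 [H2 H3]]]]];
      exists x, y; split => //; split => //;
      have [l0 El0] := Htr _ _ H1 _ H2; move: H3; rewrite El0.
    - by rewrite key.
    - by rewrite -key.
  have [g1 m1] := inf_glb P1; have [g2 m2] := inf_glb P2.
  apply/le_anti/andP; split.
  - by apply: m2 => s /E /g1.
  - by apply: m1 => s /E /g2.
have sub : [fset kp inf p l | l in closureC L] `<=` [fset kp inf p j | j in closureGC F G L].
  apply/fsubsetP => k /imfsetP [l lin ->].
  rewrite kpE; apply/imfsetP; exists (G (F l)) => //=; exact: inGC.
apply: leq_trans (fsubset_leq_card sub) _.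
apply: leq_trans (leq_imfset_card _ (kp inf p) (mem (closureGC F G L))) _.
apply: (@uniq_leq_size _ _ (closureGC F G L : seq T)); first exact: enum_finmem_uniq.
by move=> x; rewrite enum_finmemE.
Qed.
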